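(* Let $\mathbf{D}$ be a locally small dagger kernel category and $X$ an object. The set $\mathrm{End}(X)=\mathbf{D}(X,X)$, with composition as multiplication, $\mathrm{id}_X$ as unit, $\dagger$ as involution and $[s]=\ker(s)\circ\ker(s)^\dagger$, is a Foulis semigroup; in particular for $s,t\in\mathrm{End}(X)$, $s\circ t=0$ iff $t=[s]\circ r$ for some $r\in\mathrm{End}(X)$. Moreover, sending $f:X\to Y$ to the function $\mathrm{End}(X)\to\mathrm{End}(Y)$, $s\mapsto f\circ s\circ f^\dagger$, makes $X\mapsto\mathrm{End}(X)$ a functor $\mathbf{D}\to\mathbf{Sets}$.
   Context: A dagger category is a category with a contravariant functor $\dagger$ that is the identity on objects and satisfies $f^{\dagger\dagger}=f$; a dagger mono satisfies $k^\dagger\circ k=\mathrm{id}$. A dagger kernel category is a dagger category with a zero object (giving zero morphisms $0$) in which every morphism $s$ has a kernel $\ker(s)$ that is a dagger mono. A Foulis semigroup is a monoid $(S,\cdot,1)$ with maps $(-)^\dagger:S\to S$ and $[-]:S\to S$ such that: (1) $1^\dagger=1$, $(s\cdot t)^\dagger=t^\dagger\cdot s^\dagger$, $s^{\dagger\dagger}=s$; (2) $[s]\cdot[s]=[s]=[s]^\dagger$; (3) $0:=[1]$ satisfies $0\cdot s=0=s\cdot 0$ for all $s$; (4) for all $s,x$: $s\cdot x=0$ iff $x=[s]\cdot y$ for some $y\in S$. *)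

(* Defs.v *)
(** A (locally small) dagger kernel category, with chosen zero object and
    chosen dagger-mono kernels. Hom-sets are types (locally small). *)
Record DaggerKernelCat := {
  Ob : Type;
  Hom : Ob -> Ob -> Type;
  comp : forall X Y Z : Ob, Hom Y Z -> Hom X Y -> Hom X Z;
  idm : forall X : Ob, Hom X X;
  comp_assoc : forall (X Y Z W : Ob) (f : Hom X Y) (g : Hom Y Z) (h : Hom Z W),
      comp X Z W h (comp X Y Z g f) = comp X Y W (comp Y Z W h g) f;
  comp_id_l : forall (X Y : Ob) (f : Hom X Y), comp X Y Y (idm Y) f = f;
  comp_id_r : forall (X Y : Ob) (f : Hom X Y), comp X X Y f (idm X) = f;
  dag : forall X Y : Ob, Hom X Y -> Hom Y X;
  dag_id : forall X : Ob, dag X X (idm X) = idm X;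
  dag_comp : forall (X Y Z : Ob) (f : Hom X Y) (g : Hom Y Z),
      dag X Z (comp X Y Z g f) = comp Z Y X (dag X Y f) (dag Y Z g);
  dag_invol : forall (X Y : Ob) (f : Hom X Y), dag Y X (dag X Y f) = f;
  zob : Ob;
  fromZ : forall X : Ob, Hom zob X;
  toZ : forall X : Ob, Hom X zob;
  fromZ_uniq : forall (X : Ob) (f : Hom zob X), f = fromZ X;
  toZ_uniq : forall (X : Ob) (f : Hom X zob), f = toZ X;
  (* every morphism has a (chosen) kernel which is a dagger mono;
     the zero morphism X -> Y is fromZ Y o toZ X *)
  kerOb : forall X Y : Ob, Hom X Y -> Ob;
  ker : forall (X Y : Ob) (s : Hom X Y), Hom (kerOb X Y s) X;
  ker_zero : forall (X Y : Ob) (s : Hom X Y),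
      comp (kerOb X Y s) X Y s (ker X Y s)
      = comp (kerOb X Y s) zob Y (fromZ Y) (toZ (kerOb X Y s));
  ker_univ : forall (X Y W : Ob) (s : Hom X Y) (g : Hom W X),
      comp W X Y s g = comp W zob Y (fromZ Y) (toZ W) ->
      exists! h : Hom W (kerOb X Y s), comp W (kerOb X Y s) X (ker X Y s) h = g;
  ker_dagger_mono : forall (X Y : Ob) (s : Hom X Y),
      comp (kerOb X Y s) X (kerOb X Y s) (dag (kerOb X Y s) X (ker X Y s)) (ker X Y s)
      = idm (kerOb X Y s)
}.

Arguments Hom {d} X Y.
Arguments comp {d X Y Z} g f.
Arguments idm {d} X.
Arguments dag {d X Y} f.
Arguments zob {d}.
Arguments fromZ {d} X.
Arguments toZ {d} X.
Arguments kerOb {d X Y} s.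
Arguments ker {d X Y} s.

Definition zero {D : DaggerKernelCat} (X Y : Ob D) : Hom X Y :=
  comp (fromZ Y) (toZ X).

Definition End {D : DaggerKernelCat} (X : Ob D) : Type := Hom X X.

Definition bracket {D : DaggerKernelCat} {X : Ob D} (s : End X) : End X :=
  comp (ker s) (dag (ker s)).

Definition End_map {D : DaggerKernelCat} {X Y : Ob D} (f : Hom X Y)
  (s : End X) : End Y := comp f (comp s (dag f)).

Definition IsFoulisSemigroup (S : Type) (mul : S -> S -> S) (one : S)
  (dg : S -> S) (br : S -> S) : Prop :=
  (forall a b c, mul a (mul b c) = mul (mul a b) c) /\
  (forall a, mul one a = a) /\ (forall a, mul a one = a) /\
  dg one = one /\ (forall s t, dg (mul s t) = mul (dg t) (dg s)) /\
  (forall s, dg (dg s) = s) /\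
  (forall s, mul (br s) (br s) = br s /\ br s = dg (br s)) /\
  (forall s, mul (br one) s = br one /\ mul s (br one) = br one) /\
  (forall s x, mul s x = br one <-> exists y, x = mul (br s) y).

(* Main.v *)
Require Import Defs.

Lemma zero_l (D : DaggerKernelCat) (X Y Z : Ob D) (f : Hom X Y) :
  comp (zero Y Z) f = zero X Z.
Proof.
  unfold zero. rewrite <- comp_assoc. f_equal. apply toZ_uniq.
Qed.

Lemma zero_r (D : DaggerKernelCat) (X Y Z : Ob D) (g : Hom Y Z) :
  comp g (zero X Y) = zero X Z.
Proof.
  unfold zero. rewrite comp_assoc. f_equal. apply fromZ_uniq.
Qed.

Lemma ker_zero' (D : DaggerKernelCat) (X Y : Ob D) (s : Hom X Y) :
  comp s (ker s) = zero _ Y.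
Proof. apply ker_zero. Qed.

Lemma br_one (D : DaggerKernelCat) (X : Ob D) :
  bracket (idm X) = zero X X.
Proof.
  unfold bracket.
  assert (H : ker (idm X) = zero _ X).
  { rewrite <- (comp_id_l _ _ _ (ker (idm X))). apply ker_zero'. }
  rewrite H. apply zero_l.
Qed.

Theorem mainTheorem14 (D : DaggerKernelCat) (X : Ob D) :
  IsFoulisSemigroup (End X) (fun s t => comp s t) (idm X) (fun s => dag s)
    (fun s => bracket s)
  /\ (forall s t : End X,
        comp s t = zero X X <-> exists r : End X, t = comp (bracket s) r)
  /\ (forall s : End X, End_map (idm X) s = s)
  /\ (forall (Y Z : Ob D) (f : Hom X Y) (g : Hom Y Z) (s : End X),
        End_map (comp g f) s = End_map g (End_map f s)).
Proof.
  assert (H4 : forall s t : End X,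
        comp s t = zero X X <-> exists r : End X, t = comp (bracket s) r).
  { intros s t; split.
    - intro H. destruct (ker_univ D X X X s t H) as [h [Hh _]].
      exists t. unfold bracket. rewrite <- Hh.
      rewrite <- comp_assoc. rewrite (comp_assoc _ _ _ _ _ h (ker s) (dag (ker s))).
      rewrite ker_dagger_mono, comp_id_l. reflexivity.
    - intros [r ->]. unfold bracket. rewrite !comp_assoc. rewrite ker_zero'.
      rewrite !zero_l. reflexivity. }
  split; [|split; [exact H4|split]].
  - unfold IsFoulisSemigroup.
    split; [intros; apply comp_assoc|].
    split; [intros; apply comp_id_l|].
    split; [intros; apply comp_id_r|].
    split; [apply dag_id|].
    split; [intros; apply dag_comp|].
    split; [intros; apply dag_invol|].
    split.
    { intro s; unfold bracket; split.
      - rewrite comp_assoc. rewrite <- (comp_assoc _ _ _ _ _ (ker s) (dag (ker s)) (ker s)).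
        rewrite ker_dagger_mono, comp_id_r. reflexivity.
      - rewrite dag_comp, dag_invol. reflexivity. }
    split.
    { intro s; rewrite br_one; split; [apply zero_l|apply zero_r]. }
    intros s x. rewrite br_one. apply H4.
  - intro s. unfold End_map. rewrite dag_id, comp_id_l, comp_id_r. reflexivity.
  - intros Y Z f g s. unfold End_map. rewrite dag_comp. rewrite !comp_assoc. reflexivity.
Qed.
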